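(* Let $\epsilon\in\{1,-1\}$ and let $\Phi,\Psi$ be bounded operators on $\ell^2$ satisfying $$\Phi\Phi^\dagger=1+\epsilon\Psi\Psi^\dagger,\quad \Phi^\dagger\Phi=1+\epsilon\Psi^T\bar\Psi,\quad \Phi\Psi^T=\epsilon\Psi\Phi^T,\quad \Phi^\dagger\Psi=\epsilon\Psi^T\bar\Phi,$$ with $\Phi$ having a bounded inverse. Put $X:=\bar\Psi\Phi^{-1}$. Then: (i) if $\epsilon=1$, $\|X\|<1$; (ii) for every orthogonal projector $\tilde P$ on $\ell^2$, the operators $$Y:=1-\epsilon X^\dagger\tilde P^TX\tilde P,\qquad \tilde Y:=1-\epsilon X\tilde PX^\dagger\tilde P^T$$ have bounded inverses, for both $\epsilon=1$ and $\epsilon=-1$.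
   Context: Operators are written as matrices in a fixed orthonormal basis of $\ell^2$; bar denotes entrywise complex conjugation, $T$ the transpose, $\dagger$ the adjoint. $\|\cdot\|$ is the operator norm. *)

(* Defs.v *)
(* classical reals.  Bounded operators on l^2(N; C) as
   infinite matrices in the standard orthonormal basis. *)
From Stdlib Require Import Reals Classical ClassicalEpsilon FunctionalExtensionality.
Open Scope R_scope.

Record C := mkC { re : R ; im : R }.
Definition C0 : C := mkC 0 0.
Definition C1 : C := mkC 1 0.
Definition Cadd (a b : C) : C := mkC (re a + re b) (im a + im b).
Definition Cmul (a b : C) : C :=
  mkC (re a * re b - im a * im b) (re a * im b + im a * re b).
Definition Cscale (r : R) (a : C) : C := mkC (r * re a) (r * im a).
Definition Cconj (a : C) : C := mkC (re a) (- im a).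
Definition Cnorm2 (a : C) : R := re a * re a + im a * im a.

Definition Csum_to (f : nat -> C) (l : C) : Prop :=
  infinite_sum (fun n => re (f n)) (re l) /\ infinite_sum (fun n => im (f n)) (im l).
Definition Csum (f : nat -> C) : C :=
  epsilon (inhabits C0) (fun l => Csum_to f l).

Definition vec := nat -> C.
Definition l2 (x : vec) : Prop := exists s, infinite_sum (fun n => Cnorm2 (x n)) s.
(* squared norm ||x||^2 (meaningful when l2 x) *)
Definition l2norm2 (x : vec) : R :=
  epsilon (inhabits 0) (fun s => infinite_sum (fun n => Cnorm2 (x n)) s).

Definition op := nat -> nat -> C.
Definition apply (A : op) (x : vec) : vec := fun i => Csum (fun j => Cmul (A i j) (x j)).

Definition bounded_op (A : op) : Prop :=
  exists M : R, forall x, l2 x ->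
    (forall i, exists l, Csum_to (fun j => Cmul (A i j) (x j)) l) /\
    l2 (apply A x) /\ l2norm2 (apply A x) <= M * l2norm2 x.

Definition idop : op := fun i j => if Nat.eqb i j then C1 else C0.
Definition mul (A B : op) : op := fun i k => Csum (fun j => Cmul (A i j) (B j k)).
Definition addop (A B : op) : op := fun i j => Cadd (A i j) (B i j).
Definition scaleop (r : R) (A : op) : op := fun i j => Cscale r (A i j).
Definition subop (A B : op) : op := addop A (scaleop (-1) B).
Definition trans (A : op) : op := fun i j => A j i.
Definition conjop (A : op) : op := fun i j => Cconj (A i j).
Definition adj (A : op) : op := fun i j => Cconj (A j i).

Definition opnorm_lt (A : op) (r : R) : Prop :=
  exists c, 0 <= c < r /\
    forall x, l2 x -> l2 (apply A x) /\ l2norm2 (apply A x) <= c * c * l2norm2 x.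

Definition bounded_invertible (A : op) : Prop :=
  exists B, bounded_op B /\ mul A B = idop /\ mul B A = idop.

Definition orth_projector (P : op) : Prop :=
  bounded_op P /\ mul P P = P /\ adj P = P.

(* Main.v *)
Require Import Defs.
From Stdlib Require Import Reals Lra Lia Classical ClassicalEpsilon FunctionalExtensionality.
Import Defs.
Open Scope R_scope.


Lemma cv_ext (u v : nat -> R) l : (forall n, u n = v n) -> Un_cv u l -> Un_cv v l.
Proof. intros H Hu e He. destruct (Hu e He) as [N HN]. exists N; intros n Hn. rewrite <- H. auto. Qed.

Lemma cv_const c : Un_cv (fun _ => c) c.
Proof. intros e He. exists 0%nat. intros. unfold Rdist. rewrite Rminus_diag, Rabs_R0. lra. Qed.

Lemma cv_scal (u : nat -> R) l c : Un_cv u l -> Un_cv (fun n => u n * c) (l * c).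
Proof. intros H. apply (CV_mult u (fun _ => c)); auto using cv_const. Qed.

Lemma hs_plus s t a b : infinite_sum s a -> infinite_sum t b ->
  infinite_sum (fun n => s n + t n) (a + b).
Proof. intros Ha Hb. apply (cv_ext (fun n => sum_f_R0 s n + sum_f_R0 t n)).
  - intros; now rewrite plus_sum.
  - now apply CV_plus. Qed.

Lemma hs_scal s a c : infinite_sum s a -> infinite_sum (fun n => s n * c) (a * c).
Proof. intros Ha. apply (cv_ext (fun n => sum_f_R0 s n * c)).
  - intros; rewrite Rmult_comm, scal_sum; auto.
  - now apply cv_scal. Qed.

Lemma hs_scal_l s a c : infinite_sum s a -> infinite_sum (fun n => c * s n) (c * a).
Proof. intros H. apply (cv_ext (fun n => sum_f_R0 (fun k => s k * c) n)).
  - intros; apply sum_eq; intros; ring.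
  - rewrite Rmult_comm; now apply hs_scal. Qed.

Lemma hs_ext s t a : (forall n, s n = t n) -> infinite_sum s a -> infinite_sum t a.
Proof. intros H Ha. apply (cv_ext (sum_f_R0 s)); auto. intros; apply sum_eq; auto. Qed.

Lemma hs_opp s a : infinite_sum s a -> infinite_sum (fun n => - s n) (- a).
Proof. intros H. apply (hs_ext (fun n => s n * (-1))). intros; ring.
  replace (-a) with (a * -1) by ring. now apply hs_scal. Qed.

Lemma hs_minus s t a b : infinite_sum s a -> infinite_sum t b ->
  infinite_sum (fun n => s n - t n) (a - b).
Proof. intros. apply (hs_ext (fun n => s n + - t n)). intros; ring.
  apply hs_plus; auto. now apply hs_opp. Qed.

Lemma hs_le s t a b : (forall n, s n <= t n) -> infinite_sum s a -> infinite_sum t b -> a <= b.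
Proof. intros H Ha Hb. eapply (@Rle_cv_lim (sum_f_R0 s) (sum_f_R0 t)); eauto.
  intros; apply sum_Rle; auto. Qed.

Lemma hs_partial_le s l N : (forall n, 0 <= s n) -> infinite_sum s l -> sum_f_R0 s N <= l.
Proof. intros H Hl. apply sum_incr; auto. Qed.

Lemma sum_nonneg s N : (forall n, 0 <= s n) -> 0 <= sum_f_R0 s N.
Proof. intros H; induction N; simpl; auto. specialize (H (S N)); lra. Qed.

Lemma hs_nonneg s l : (forall n, 0 <= s n) -> infinite_sum s l -> 0 <= l.
Proof. intros H Hl. apply Rle_trans with (sum_f_R0 s 0). simpl; auto.
  now apply hs_partial_le. Qed.

Lemma term_le_sum s n : (forall k, 0 <= s k) -> s n <= sum_f_R0 s n.
Proof. intros H. destruct n; simpl. lra. pose proof (sum_nonneg s n H). lra. Qed.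

Lemma hs_term_le s l n : (forall k, 0 <= s k) -> infinite_sum s l -> s n <= l.
Proof. intros. eapply Rle_trans. apply term_le_sum; auto. now apply hs_partial_le. Qed.

Lemma hs_pos_bound s B : (forall n, 0 <= s n) -> (forall N, sum_f_R0 s N <= B) ->
  exists l, infinite_sum s l /\ l <= B.
Proof. intros H HB.
  destruct (growing_cv (sum_f_R0 s)) as [l Hl].
  - intros n; simpl. specialize (H (S n)); lra.
  - exists B. intros x [n ->]. auto.
  - exists l; split; auto. eapply (@Rle_cv_lim (sum_f_R0 s) (fun _ => B)); eauto.
    apply cv_const. Qed.

Lemma hs_exists_comp s t b : (forall n, Rabs (s n) <= t n) -> infinite_sum t b ->
  exists a, infinite_sum s a.
Proof. intros H Hb.
  assert (Ht2 : infinite_sum (fun n => t n * 2) (b * 2)) by now apply hs_scal.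
  destruct (Rseries_CV_comp (fun n => t n - s n) (fun n => t n * 2)) as [l Hl].
  - intros n; specialize (H n). split; apply Rabs_le_between in H || idtac;
      pose proof (Rle_abs (s n)); pose proof (Rabs_pos (s n));
      pose proof (Rabs_Ropp (s n)); pose proof (Rle_abs (- s n)); lra.
  - exists (b*2); exact Ht2.
  - exists (b - l). apply (hs_ext (fun n => t n - (t n - s n))). intros; ring.
    apply hs_minus; auto. Qed.

Lemma sum_finite s N n : (forall k, (N < k)%nat -> s k = 0) -> (N <= n)%nat ->
  sum_f_R0 s n = sum_f_R0 s N.
Proof. intros H Hn. induction Hn; auto. simpl. rewrite H by lia. lra. Qed.

Lemma hs_finite s N : (forall k, (N < k)%nat -> s k = 0) -> infinite_sum s (sum_f_R0 s N).
Proof. intros H e He. exists N. intros n Hn. rewrite (sum_finite s N n); auto.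
  unfold Rdist; rewrite Rminus_diag, Rabs_R0; lra. Qed.

Lemma sum_tail s N n : (N <= n)%nat ->
  sum_f_R0 (fun j => if (j <=? N)%nat then 0 else s j) n = sum_f_R0 s n - sum_f_R0 s N.
Proof. intros Hn. induction Hn.
  - rewrite (sum_eq _ (fun _ => 0)). 2:{ intros i Hi. destruct (Nat.leb_spec i N); [reflexivity | lia]. }
    clear. induction N; simpl; lra.
  - rewrite !tech5, IHHn. assert (E: (S m <=? N)%nat = false) by (apply Nat.leb_gt; lia). rewrite E. lra. Qed.

Lemma hs_tail s l N : infinite_sum s l ->
  infinite_sum (fun j => if (j <=? N)%nat then 0 else s j) (l - sum_f_R0 s N).
Proof. intros H e He. destruct (H e He) as [M HM]. exists (max M N). intros n Hn.
  rewrite sum_tail by lia. unfold Rdist. replace (sum_f_R0 s n - sum_f_R0 s N - (l - sum_f_R0 s N))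
   with (sum_f_R0 s n - l) by ring. apply HM; lia. Qed.

Lemma hs_tail0 s l : infinite_sum s l -> Un_cv (fun N => l - sum_f_R0 s N) 0.
Proof. intros H e He. destruct (H e He) as [M HM]. exists M. intros n Hn.
  unfold Rdist. replace (l - sum_f_R0 s n - 0) with (- (sum_f_R0 s n - l)) by ring.
  rewrite Rabs_Ropp. apply HM; auto. Qed.


Lemma Ceq (a b : C) : re a = re b -> im a = im b -> a = b.
Proof. destruct a, b; simpl; intros; subst; auto. Qed.

Ltac Csimpl := unfold Cadd, Cmul, Cscale, Cconj, Cnorm2, C0, C1 in *; simpl in *.
Ltac Cring := apply Ceq; Csimpl; ring.
Ltac sqn x := assert (0 <= (x) * (x)) by (apply Rle_0_sqr).

Definition csumN (f : nat -> C) (N : nat) : C :=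
  mkC (sum_f_R0 (fun j => re (f j)) N) (sum_f_R0 (fun j => im (f j)) N).

Lemma Csum_spec f l : Csum_to f l -> Csum f = l.
Proof. intros H. unfold Csum. assert (E : exists l, Csum_to f l) by eauto.
  pose proof (epsilon_spec (inhabits C0) _ E) as H2. set (l2 := epsilon _ _) in *.
  destruct H as [H1a H1b], H2 as [H2a H2b]. apply Ceq.
  - eapply uniqueness_sum; eauto.
  - eapply uniqueness_sum; eauto. Qed.

Lemma Csum_to_ext f g l : (forall n, f n = g n) -> Csum_to f l -> Csum_to g l.
Proof. intros H [H1 H2]. split; eapply hs_ext; eauto; intros; simpl; now rewrite H. Qed.

Lemma Csum_to_add f g a b : Csum_to f a -> Csum_to g b ->
  Csum_to (fun j => Cadd (f j) (g j)) (Cadd a b).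
Proof. intros [H1 H2] [H3 H4]. split; simpl; now apply hs_plus. Qed.

Lemma Csum_to_mul f a c : Csum_to f a -> Csum_to (fun j => Cmul c (f j)) (Cmul c a).
Proof. intros [H1 H2]. split; simpl.
  - apply hs_minus; now apply hs_scal_l.
  - apply hs_plus; now apply hs_scal_l. Qed.

Lemma Csum_to_scale f a t : Csum_to f a -> Csum_to (fun j => Cscale t (f j)) (Cscale t a).
Proof. intros [H1 H2]. split; simpl; now apply hs_scal_l. Qed.

Lemma Csum_to_conj f a : Csum_to f a -> Csum_to (fun j => Cconj (f j)) (Cconj a).
Proof. intros [H1 H2]. split; simpl; auto. now apply hs_opp. Qed.

Lemma Csum_to_finite f N : (forall k, (N < k)%nat -> f k = C0) -> Csum_to f (csumN f N).
Proof. intros H. split; simpl; apply hs_finite; intros k Hk; rewrite H; auto. Qed.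

Lemma Csum_to_cv f l : Csum_to f l <->
  (Un_cv (fun n => re (csumN f n)) (re l) /\ Un_cv (fun n => im (csumN f n)) (im l)).
Proof. reflexivity. Qed.

Lemma csumN_S f N : csumN f (S N) = Cadd (csumN f N) (f (S N)).
Proof. reflexivity. Qed.
Lemma csumN_0 f : csumN f 0 = f 0%nat.
Proof. apply Ceq; reflexivity. Qed.

Definition vadd (x y : vec) : vec := fun i => Cadd (x i) (y i).
Definition vsub (x y : vec) : vec := fun i => mkC (re (x i) - re (y i)) (im (x i) - im (y i)).
Definition vscal (c : C) (x : vec) : vec := fun i => Cmul c (x i).
Definition vrs (t : R) (x : vec) : vec := fun i => Cscale t (x i).
Definition vconj (x : vec) : vec := fun i => Cconj (x i).
Definition vzero : vec := fun _ => C0.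
Definition ev (k : nat) : vec := fun i => idop i k.
Definition trunc (N : nat) (x : vec) : vec := fun i => if (i <=? N)%nat then x i else C0.

Ltac vext := apply functional_extensionality; intro.
Ltac vring := vext; unfold vadd, vsub, vscal, vrs, vconj, vzero in *; Cring.

Lemma Cnorm2_nonneg a : 0 <= Cnorm2 a.
Proof. unfold Cnorm2; nra. Qed.

Lemma l2norm2_spec x : l2 x -> infinite_sum (fun n => Cnorm2 (x n)) (l2norm2 x).
Proof. intros H. unfold l2norm2. apply (epsilon_spec (inhabits 0) _ H). Qed.

Lemma l2norm2_eq x s : infinite_sum (fun n => Cnorm2 (x n)) s -> l2norm2 x = s.
Proof. intros H. eapply uniqueness_sum. apply l2norm2_spec. exists s; auto. auto. Qed.

Lemma l2norm2_nonneg x : l2 x -> 0 <= l2norm2 x.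
Proof. intros H. eapply hs_nonneg. 2: apply l2norm2_spec; auto. intros; apply Cnorm2_nonneg. Qed.

Lemma l2_coord x i : l2 x -> Cnorm2 (x i) <= l2norm2 x.
Proof. intros H. apply (hs_term_le (fun n => Cnorm2 (x n))). intros; apply Cnorm2_nonneg. now apply l2norm2_spec. Qed.

Lemma l2_partial x N : l2 x -> sum_f_R0 (fun n => Cnorm2 (x n)) N <= l2norm2 x.
Proof. intros H. apply hs_partial_le. intros; apply Cnorm2_nonneg. now apply l2norm2_spec. Qed.

Lemma l2_of_bound x B : (forall N, sum_f_R0 (fun n => Cnorm2 (x n)) N <= B) ->
  l2 x /\ l2norm2 x <= B.
Proof. intros H. destruct (hs_pos_bound (fun n => Cnorm2 (x n)) B) as [l [Hl Hb]]; auto.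
  intros; apply Cnorm2_nonneg. split. exists l; auto. now rewrite (l2norm2_eq x l). Qed.

Lemma l2_comp x y c : (forall n, Cnorm2 (x n) <= c * Cnorm2 (y n)) -> l2 y -> l2 x.
Proof. intros H Hy. destruct (hs_exists_comp (fun n => Cnorm2 (x n)) (fun n => c * Cnorm2 (y n)) (c * l2norm2 y)) as [a Ha].
  - intros n. rewrite Rabs_right. auto. apply Rle_ge, Cnorm2_nonneg.
  - apply hs_scal_l. now apply l2norm2_spec.
  - exists a; auto. Qed.

Lemma l2_add x y : l2 x -> l2 y -> l2 (vadd x y).
Proof. intros Hx Hy. destruct (hs_exists_comp (fun n => Cnorm2 (vadd x y n))
   (fun n => 2 * Cnorm2 (x n) + 2 * Cnorm2 (y n)) (2 * l2norm2 x + 2 * l2norm2 y)) as [a Ha].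
  - intros n. rewrite Rabs_right. 2: apply Rle_ge, Cnorm2_nonneg. unfold vadd; Csimpl.
    sqn (re (x n) - re (y n)). sqn (im (x n) - im (y n)). nra.
  - apply hs_plus; apply hs_scal_l; now apply l2norm2_spec.
  - exists a; auto. Qed.

Lemma l2_scal c x : l2 x -> l2 (vscal c x).
Proof. intros H. apply (l2_comp _ x (Cnorm2 c)); auto. intros n. unfold vscal; Csimpl. nra. Qed.

Lemma l2_rs t x : l2 x -> l2 (vrs t x).
Proof. intros H. apply (l2_comp _ x (t*t)); auto. intros n. unfold vrs; Csimpl. nra. Qed.

Lemma l2_conj x : l2 x -> l2 (vconj x).
Proof. intros H. apply (l2_comp _ x 1); auto. intros n. unfold vconj; Csimpl. nra. Qed.

Lemma l2_sub x y : l2 x -> l2 y -> l2 (vsub x y).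
Proof. intros Hx Hy. replace (vsub x y) with (vadd x (vrs (-1) y)) by vring.
  apply l2_add; auto. now apply l2_rs. Qed.

Lemma l2_zero : l2 vzero.
Proof. exists 0. apply (hs_ext (fun _ => 0)). intros; unfold vzero; Csimpl; ring.
  intros e He; exists 0%nat; intros. rewrite sum_cte. unfold Rdist. rewrite Rmult_0_l, Rminus_diag, Rabs_R0. lra. Qed.

Lemma l2norm2_zero : l2norm2 vzero = 0.
Proof. apply l2norm2_eq. apply (hs_ext (fun n => 0 * 1)). intros; unfold vzero; Csimpl; ring.
  replace 0 with (0*1) at 2 by ring. apply (hs_scal_l (fun _ => 1) 0 0) || idtac.
  intros e He; exists 0%nat; intros. rewrite sum_cte. unfold Rdist. rewrite Rmult_0_l, Rmult_0_l, Rminus_diag, Rabs_R0. lra. Qed.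

Lemma l2_finite x N : (forall k, (N < k)%nat -> x k = C0) -> l2 x.
Proof. intros H. exists (sum_f_R0 (fun n => Cnorm2 (x n)) N). apply hs_finite.
  intros k Hk. rewrite H; auto. Csimpl; ring. Qed.

Lemma l2_trunc N x : l2 (trunc N x).
Proof. apply (l2_finite _ N). intros k Hk. unfold trunc. destruct (Nat.leb_spec k N); auto; lia. Qed.

Lemma l2_ev k : l2 (ev k).
Proof. apply (l2_finite _ k). intros j Hj. unfold ev, idop. destruct (Nat.eqb_spec j k); auto; lia. Qed.

Lemma l2norm2_zero_inv x : l2 x -> l2norm2 x <= 0 -> x = vzero.
Proof. intros H H0. vext. pose proof (l2_coord x x0 H). pose proof (Cnorm2_nonneg (x x0)).
  unfold vzero; apply Ceq; Csimpl; nra. Qed.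

Lemma l2norm2_rs t x : l2 x -> l2norm2 (vrs t x) = t * t * l2norm2 x.
Proof. intros H. apply l2norm2_eq. apply (hs_ext (fun n => t * t * Cnorm2 (x n))).
  intros; unfold vrs; Csimpl; ring. apply hs_scal_l; now apply l2norm2_spec. Qed.

Lemma l2norm2_conj x : l2 x -> l2norm2 (vconj x) = l2norm2 x.
Proof. intros H. apply l2norm2_eq. apply (hs_ext (fun n => Cnorm2 (x n))).
  intros; unfold vconj; Csimpl; ring. now apply l2norm2_spec. Qed.

Lemma l2norm2_le x y c : l2 x -> l2 y -> (forall n, Cnorm2 (x n) <= c * Cnorm2 (y n)) ->
  l2norm2 x <= c * l2norm2 y.
Proof. intros Hx Hy H. apply (hs_le (fun n => Cnorm2 (x n)) (fun n => c * Cnorm2 (y n))); auto.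
  now apply l2norm2_spec. apply hs_scal_l; now apply l2norm2_spec. Qed.


Definition cip (x y : vec) : C := Csum (fun j => Cmul (Cconj (x j)) (y j)).

Lemma amgm2 t a b : 0 < t -> 2 * (a * b) <= t * (a * a) + / t * (b * b).
Proof. intros Ht. set (c := b / t). assert (Hb : b = t * c) by (unfold c; field; lra).
  rewrite Hb. replace (/ t * (t * c * (t * c))) with (t * (c * c)) by (field; lra).
  assert (0 <= t * ((a - c) * (a - c))) by (apply Rmult_le_pos; [lra | apply Rle_0_sqr]). nra. Qed.

Lemma prod_conv u v : l2 u -> l2 v -> exists l, Csum_to (fun j => Cmul (u j) (v j)) l.
Proof. intros Hu Hv.
  assert (Hs : infinite_sum (fun n => Cnorm2 (u n) + Cnorm2 (v n)) (l2norm2 u + l2norm2 v))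
    by (apply hs_plus; now apply l2norm2_spec).
  destruct (hs_exists_comp (fun n => re (Cmul (u n) (v n))) (fun n => Cnorm2 (u n) + Cnorm2 (v n)) (l2norm2 u + l2norm2 v)) as [a Ha]; [ | exact Hs | ].
  { intros n. Csimpl. apply Rabs_le.
    pose proof (amgm2 1 (re (u n)) (re (v n))). pose proof (amgm2 1 (im (u n)) (im (v n))).
    pose proof (amgm2 1 (re (u n)) (- re (v n))). pose proof (amgm2 1 (im (u n)) (- im (v n))).
    rewrite Rinv_1 in *. split; nra. }
  destruct (hs_exists_comp (fun n => im (Cmul (u n) (v n))) (fun n => Cnorm2 (u n) + Cnorm2 (v n)) (l2norm2 u + l2norm2 v)) as [b Hb]; [ | exact Hs | ].
  { intros n. Csimpl. apply Rabs_le.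
    pose proof (amgm2 1 (re (u n)) (im (v n))). pose proof (amgm2 1 (im (u n)) (re (v n))).
    pose proof (amgm2 1 (re (u n)) (- im (v n))). pose proof (amgm2 1 (im (u n)) (- re (v n))).
    rewrite Rinv_1 in *. split; nra. }
  exists (mkC a b). split; auto. Qed.

Lemma cip_spec x y : l2 x -> l2 y -> Csum_to (fun j => Cmul (Cconj (x j)) (y j)) (cip x y).
Proof. intros Hx Hy. destruct (prod_conv (vconj x) y) as [l Hl]; auto. now apply l2_conj.
  unfold cip. rewrite (Csum_spec _ l); auto. Qed.

Lemma cip_eq x y l : Csum_to (fun j => Cmul (Cconj (x j)) (y j)) l -> cip x y = l.
Proof. apply Csum_spec. Qed.

Lemma cip_add_l a b y : l2 a -> l2 b -> l2 y -> cip (vadd a b) y = Cadd (cip a y) (cip b y).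
Proof. intros. apply cip_eq. eapply Csum_to_ext.
  2: apply Csum_to_add; apply cip_spec; eauto. intros; unfold vadd; Cring. Qed.

Lemma cip_scal_l c a y : l2 a -> l2 y -> cip (vscal c a) y = Cmul (Cconj c) (cip a y).
Proof. intros. apply cip_eq. eapply Csum_to_ext.
  2: apply Csum_to_mul; apply cip_spec; eauto. intros; unfold vscal; Cring. Qed.

Lemma cip_rs_l t a y : l2 a -> l2 y -> cip (vrs t a) y = Cscale t (cip a y).
Proof. intros. apply cip_eq. eapply Csum_to_ext.
  2: apply Csum_to_scale; apply cip_spec; eauto. intros; unfold vrs; Cring. Qed.

Lemma cip_sub_l a b y : l2 a -> l2 b -> l2 y ->
  cip (vsub a b) y = mkC (re (cip a y) - re (cip b y)) (im (cip a y) - im (cip b y)).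
Proof. intros. replace (mkC _ _) with (Cadd (cip a y) (Cscale (-1) (cip b y))) by Cring.
  apply cip_eq. eapply Csum_to_ext.
  2: apply Csum_to_add; [apply cip_spec | apply Csum_to_scale; apply cip_spec]; eauto.
  intros; unfold vsub; Cring. Qed.

Lemma cip_sym x y : l2 x -> l2 y -> cip y x = Cconj (cip x y).
Proof. intros. apply cip_eq. eapply Csum_to_ext.
  2: apply Csum_to_conj; apply cip_spec; eauto. intros; Cring. Qed.

Lemma cip_self x : l2 x -> cip x x = mkC (l2norm2 x) 0.
Proof. intros H. apply cip_eq. split; simpl.
  - eapply hs_ext. 2: apply l2norm2_spec; auto. intros; Csimpl; ring.
  - apply (hs_ext (fun _ => 0)). intros; Csimpl; ring. apply (hs_finite (fun _ => 0) 0); auto. Qed.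

Lemma cip_re_bound t x y : 0 < t -> l2 x -> l2 y ->
  2 * Rabs (re (cip x y)) <= t * l2norm2 x + / t * l2norm2 y.
Proof. intros Ht Hx Hy. destruct (cip_spec x y Hx Hy) as [H1 _].
  assert (Hs : infinite_sum (fun n => t * Cnorm2 (x n) + / t * Cnorm2 (y n)) (t * l2norm2 x + / t * l2norm2 y))
    by (apply hs_plus; apply hs_scal_l; now apply l2norm2_spec).
  assert (H2 := hs_scal _ _ 2 H1). assert (H3 := hs_opp _ _ H2).
  unfold Rabs; destruct (Rcase_abs _).
  - replace (2 * - re (cip x y)) with (- (re (cip x y) * 2)) by ring.
    eapply hs_le; [|exact H3|exact Hs]. intros n; Csimpl.
    pose proof (amgm2 t (re (x n)) (- re (y n)) Ht). pose proof (amgm2 t (im (x n)) (- im (y n)) Ht). nra.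
  - rewrite Rmult_comm. eapply hs_le; [|exact H2|exact Hs]. intros n; Csimpl.
    pose proof (amgm2 t (re (x n)) (re (y n)) Ht). pose proof (amgm2 t (im (x n)) (im (y n)) Ht). nra. Qed.

Lemma cip_im_bound t x y : 0 < t -> l2 x -> l2 y ->
  2 * Rabs (im (cip x y)) <= t * l2norm2 x + / t * l2norm2 y.
Proof. intros Ht Hx Hy. destruct (cip_spec x y Hx Hy) as [_ H1].
  assert (Hs : infinite_sum (fun n => t * Cnorm2 (x n) + / t * Cnorm2 (y n)) (t * l2norm2 x + / t * l2norm2 y))
    by (apply hs_plus; apply hs_scal_l; now apply l2norm2_spec).
  assert (H2 := hs_scal _ _ 2 H1). assert (H3 := hs_opp _ _ H2).
  unfold Rabs; destruct (Rcase_abs _).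
  - replace (2 * - im (cip x y)) with (- (im (cip x y) * 2)) by ring.
    eapply hs_le; [|exact H3|exact Hs]. intros n; Csimpl.
    pose proof (amgm2 t (re (x n)) (- im (y n)) Ht). pose proof (amgm2 t (im (x n)) (re (y n)) Ht). nra.
  - rewrite Rmult_comm. eapply hs_le; [|exact H2|exact Hs]. intros n; Csimpl.
    pose proof (amgm2 t (re (x n)) (im (y n)) Ht). pose proof (amgm2 t (im (x n)) (- re (y n)) Ht). nra. Qed.

Lemma norm_add x y : l2 x -> l2 y ->
  l2norm2 (vadd x y) = l2norm2 x + 2 * re (cip x y) + l2norm2 y.
Proof. intros Hx Hy. apply l2norm2_eq. destruct (cip_spec x y Hx Hy) as [H1 _].
  eapply hs_ext. 2: apply hs_plus; [apply hs_plus|]; [apply l2norm2_spec; auto| apply hs_scal_l; exact H1 | apply l2norm2_spec; auto].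
  intros; unfold vadd; Csimpl; ring. Qed.

Lemma norm_sub x y : l2 x -> l2 y ->
  l2norm2 (vsub x y) = l2norm2 x - 2 * re (cip x y) + l2norm2 y.
Proof. intros Hx Hy. apply l2norm2_eq. destruct (cip_spec x y Hx Hy) as [H1 _].
  eapply hs_ext. 2: apply hs_plus; [apply hs_minus|]; [apply l2norm2_spec; auto| apply hs_scal_l; exact H1 | apply l2norm2_spec; auto].
  intros; unfold vsub; Csimpl; ring. Qed.

Lemma norm_add_le s x y : 0 < s -> l2 x -> l2 y ->
  l2norm2 (vadd x y) <= (1 + s) * l2norm2 x + (1 + / s) * l2norm2 y.
Proof. intros Hs Hx Hy. rewrite norm_add; auto. pose proof (cip_re_bound s x y Hs Hx Hy).
  pose proof (Rle_abs (re (cip x y))). lra. Qed.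

Lemma trunc_S N x : trunc (S N) x = vadd (trunc N x) (vscal (x (S N)) (ev (S N))).
Proof. vext. unfold trunc, vadd, vscal, ev, idop. rename x0 into i.
  destruct (Nat.leb_spec i (S N)), (Nat.leb_spec i N), (Nat.eqb_spec i (S N)); subst; try lia; Cring. Qed.

Lemma trunc_0 x : trunc 0 x = vscal (x 0%nat) (ev 0).
Proof. vext. unfold trunc, vscal, ev, idop. rename x0 into i.
  destruct (Nat.leb_spec i 0), (Nat.eqb_spec i 0); subst; try lia; Cring. Qed.

Lemma cip_trunc_l N v u : cip (trunc N v) u = csumN (fun k => Cmul (Cconj (v k)) (u k)) N.
Proof. apply cip_eq.
  assert (E: csumN (fun k => Cmul (Cconj (v k)) (u k)) N = csumN (fun k => Cmul (Cconj (trunc N v k)) (u k)) N).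
  { apply Ceq; simpl; apply sum_eq; intros k Hk; unfold trunc; destruct (Nat.leb_spec k N); auto; lia. }
  rewrite E. apply Csum_to_finite. intros k Hk; unfold trunc; destruct (Nat.leb_spec k N); try lia. Cring. Qed.


Lemma cv_sq0 (a b : nat -> R) : (forall n, a n * a n <= b n) -> Un_cv b 0 -> Un_cv a 0.
Proof. intros H Hb e He. destruct (Hb (e*e)) as [N HN]. nra. exists N. intros n Hn.
  specialize (HN n Hn). specialize (H n). unfold Rdist in *. rewrite Rminus_0_r in *.
  apply Rabs_def2 in HN. destruct (Rlt_or_le (Rabs (a n)) e); auto.
  assert (Rabs (a n) * Rabs (a n) = a n * a n) by (rewrite <- Rabs_mult; apply Rabs_right; nra).
  nra. Qed.

Lemma cv_shift0 (u : nat -> R) l : Un_cv (fun n => u n - l) 0 -> Un_cv u l.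
Proof. intros H e He. destruct (H e He) as [N HN]. exists N. intros n Hn.
  specialize (HN n Hn). unfold Rdist in *. rewrite Rminus_0_r in HN. auto. Qed.

Lemma cv_sandwich (a b : nat -> R) M : (forall n, 0 <= a n <= M * b n) -> Un_cv b 0 -> Un_cv a 0.
Proof. intros H Hb. apply (cv_sq0 a (fun n => (M * b n) * (M * b n))).
  - intros n; specialize (H n). nra.
  - replace 0 with ((M * 0) * (M * 0)) by ring. apply CV_mult; apply (cv_ext (fun n => b n * M)); try (intros; ring);
    replace (M * 0) with (0 * M) by ring; now apply cv_scal. Qed.

Definition cvl2 (y : nat -> vec) (z : vec) := Un_cv (fun n => l2norm2 (vsub (y n) z)) 0.

Lemma coord_cv y z i : (forall n, l2 (y n)) -> l2 z -> cvl2 y z ->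
  Un_cv (fun n => re (y n i)) (re (z i)) /\ Un_cv (fun n => im (y n i)) (im (z i)).
Proof. intros Hy Hz H. split; apply cv_shift0; eapply cv_sq0; [|exact H| |exact H]; intros n;
  pose proof (l2_coord (vsub (y n) z) i (l2_sub _ _ (Hy n) Hz)); unfold vsub in *; Csimpl;
  pose proof (Rle_0_sqr (re (y n i) - re (z i))); pose proof (Rle_0_sqr (im (y n i) - im (z i)));
  unfold Rsqr in *; lra. Qed.

Lemma trunc_cv x : l2 x -> cvl2 (fun N => trunc N x) x.
Proof. intros H. unfold cvl2. apply (cv_ext (fun N => l2norm2 x - sum_f_R0 (fun n => Cnorm2 (x n)) N)).
  2: apply hs_tail0; now apply l2norm2_spec.
  intros N. symmetry. apply l2norm2_eq. eapply hs_ext. 2: apply hs_tail; now apply l2norm2_spec.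
  intros n; unfold vsub, trunc. destruct (Nat.leb_spec n N); Csimpl; ring. Qed.

Record blin (T : vec -> vec) : Prop := {
  bl_l2 : forall x, l2 x -> l2 (T x);
  bl_add : forall x y, l2 x -> l2 y -> T (vadd x y) = vadd (T x) (T y);
  bl_scal : forall c x, l2 x -> T (vscal c x) = vscal c (T x);
  bl_bnd : exists M, 0 < M /\ forall x, l2 x -> l2norm2 (T x) <= M * l2norm2 x }.

Lemma bl_sub T x y : blin T -> l2 x -> l2 y -> T (vsub x y) = vsub (T x) (T y).
Proof. intros HT Hx Hy. replace (vsub x y) with (vadd x (vscal (mkC (-1) 0) y)) by vring.
  rewrite bl_add, bl_scal; auto. vring. apply l2_scal; auto. Qed.

Lemma bl_rs T t x : blin T -> l2 x -> T (vrs t x) = vrs t (T x).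
Proof. intros HT Hx. replace (vrs t x) with (vscal (mkC t 0) x) by vring.
  rewrite bl_scal; auto. vring. Qed.

Lemma bl_cont T y z : blin T -> (forall n, l2 (y n)) -> l2 z -> cvl2 y z -> cvl2 (fun n => T (y n)) (T z).
Proof. intros HT Hy Hz H. destruct (bl_bnd T HT) as [M [HM HMb]]. unfold cvl2.
  apply (cv_sandwich _ (fun n => l2norm2 (vsub (y n) z)) M); auto. intros n. rewrite <- bl_sub; auto. split.
  apply l2norm2_nonneg, bl_l2, l2_sub; auto. apply HMb, l2_sub; auto. Qed.

Lemma blin_trunc T x N i : blin T -> T (trunc N x) i = csumN (fun k => Cmul (T (ev k) i) (x k)) N.
Proof. intros HT. induction N.
  - rewrite trunc_0, csumN_0, (bl_scal T HT) by apply l2_ev. unfold vscal; Cring.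
  - rewrite trunc_S, csumN_S, (bl_add T HT), (bl_scal T HT), <- IHN; try apply l2_scal; try apply l2_ev; try apply l2_trunc.
    unfold vadd, vscal; Cring. Qed.

Lemma blin_row T x i : blin T -> l2 x -> Csum_to (fun k => Cmul (T (ev k) i) (x k)) (T x i).
Proof. intros HT Hx. destruct (coord_cv (fun N => T (trunc N x)) (T x) i) as [H1 H2].
  - intros; apply bl_l2; auto; apply l2_trunc.
  - apply bl_l2; auto.
  - apply bl_cont; auto. intros; apply l2_trunc. now apply trunc_cv.
  - split; [eapply cv_ext; [|exact H1] | eapply cv_ext; [|exact H2]]; intros n; simpl;
      rewrite blin_trunc; auto. Qed.

Definition matT (T : vec -> vec) : op := fun i k => T (ev k) i.

Lemma apply_matT T x : blin T -> l2 x -> apply (matT T) x = T x.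
Proof. intros HT Hx. vext. unfold apply, matT. apply Csum_spec. now apply blin_row. Qed.

Lemma bounded_matT T : blin T -> bounded_op (matT T).
Proof. intros HT. destruct (bl_bnd T HT) as [M [HM HMb]]. exists M. intros x Hx.
  rewrite apply_matT; auto. split; [|split]; auto. intros i. exists (T x i). now apply blin_row.
  now apply bl_l2. Qed.

Lemma apply_row A x i : bounded_op A -> l2 x -> Csum_to (fun j => Cmul (A i j) (x j)) (apply A x i).
Proof. intros [M HM] Hx. destruct (HM x Hx) as [H1 _]. destruct (H1 i) as [l Hl].
  unfold apply. now rewrite (Csum_spec _ l). Qed.

Lemma bounded_blin A : bounded_op A -> blin (apply A).
Proof. intros HA. split.
  - intros x Hx. destruct HA as [M HM]. apply (HM x Hx).
  - intros x y Hx Hy. vext. rename x0 into i. unfold apply at 1. apply Csum_spec.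
    eapply Csum_to_ext. 2: apply Csum_to_add; apply apply_row; eauto.
    intros; unfold vadd; Cring.
  - intros c x Hx. vext. rename x0 into i. unfold apply at 1. apply Csum_spec.
    eapply Csum_to_ext. 2: apply Csum_to_mul; apply apply_row; eauto.
    intros; unfold vscal; Cring.
  - destruct HA as [M HM]. exists (Rmax M 1). split. pose proof (Rmax_r M 1); lra.
    intros x Hx. destruct (HM x Hx) as [_ [_ H]]. pose proof (l2norm2_nonneg x Hx).
    pose proof (Rmax_l M 1). nra. Qed.

Lemma sum_zero f N : (forall m, (m <= N)%nat -> f m = 0) -> sum_f_R0 f N = 0.
Proof. intros H. induction N; simpl. apply H; lia. rewrite IHN, H; auto. ring. Qed.

Lemma sum_single f k : (forall m, m <> k -> f m = 0) -> sum_f_R0 f k = f k.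
Proof. intros H. destruct k. reflexivity. simpl. rewrite sum_zero. ring. intros; apply H; lia. Qed.

Lemma apply_ev A k : apply A (ev k) = fun j => A j k.
Proof. vext. rename x into j. unfold apply. apply Csum_spec.
  replace (A j k) with (csumN (fun m => Cmul (A j m) (ev k m)) k).
  - apply Csum_to_finite. intros m Hm. unfold ev, idop. destruct (Nat.eqb_spec m k); try lia. Cring.
  - apply Ceq; simpl; rewrite sum_single; unfold ev, idop; try rewrite Nat.eqb_refl; Csimpl; try ring;
      intros m Hm; destruct (Nat.eqb_spec m k); try lia; Csimpl; ring. Qed.

Lemma matT_apply A : matT (apply A) = A.
Proof. unfold matT. do 2 (apply functional_extensionality; intro). now rewrite apply_ev. Qed.

Lemma blin_id : blin (fun x => x).
Proof. split; auto. exists 1. split. lra. intros; lra. Qed.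

Lemma blin_comp S T : blin S -> blin T -> blin (fun x => S (T x)).
Proof. intros HS HT. destruct (bl_bnd S HS) as [M1 [H1 H1b]]. destruct (bl_bnd T HT) as [M2 [H2 H2b]].
  split.
  - intros; apply bl_l2; auto; apply bl_l2; auto.
  - intros. rewrite bl_add; auto. apply bl_add; auto; apply bl_l2; auto.
  - intros. rewrite bl_scal; auto. apply bl_scal; auto; apply bl_l2; auto.
  - exists (M1 * M2). split. nra. intros x Hx. eapply Rle_trans. apply H1b, bl_l2; auto.
    rewrite Rmult_assoc. apply Rmult_le_compat_l; auto. lra. Qed.

Lemma blin_add S T : blin S -> blin T -> blin (fun x => vadd (S x) (T x)).
Proof. intros HS HT. destruct (bl_bnd S HS) as [M1 [H1 H1b]]. destruct (bl_bnd T HT) as [M2 [H2 H2b]].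
  split.
  - intros; apply l2_add; apply bl_l2; auto.
  - intros. rewrite (bl_add S HS), (bl_add T HT); auto. vring.
  - intros. rewrite (bl_scal S HS), (bl_scal T HT); auto. vring.
  - exists (2 * (M1 + M2)). split. lra. intros x Hx. eapply Rle_trans.
    apply (norm_add_le 1); try lra; apply bl_l2; auto.
    pose proof (H1b x Hx). pose proof (H2b x Hx). pose proof (l2norm2_nonneg x Hx).
    pose proof (l2norm2_nonneg _ (bl_l2 S HS x Hx)). pose proof (l2norm2_nonneg _ (bl_l2 T HT x Hx)).
    rewrite Rinv_1. lra. Qed.

Lemma blin_rs t T : blin T -> blin (fun x => vrs t (T x)).
Proof. intros HT. destruct (bl_bnd T HT) as [M1 [H1 H1b]]. split.
  - intros; apply l2_rs; apply bl_l2; auto.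
  - intros. rewrite (bl_add T HT); auto. vring.
  - intros. rewrite (bl_scal T HT); auto. vring.
  - assert (Ht : 0 <= t * t) by apply Rle_0_sqr.
    exists (t * t * M1 + 1). split. nra. intros x Hx.
    rewrite l2norm2_rs by (apply bl_l2; auto). pose proof (H1b x Hx). pose proof (l2norm2_nonneg x Hx).
    apply Rle_trans with (t * t * (M1 * l2norm2 x)). apply Rmult_le_compat_l; auto. lra. Qed.

Lemma blin_conj T : blin T -> blin (fun x => vconj (T (vconj x))).
Proof. intros HT. destruct (bl_bnd T HT) as [M1 [H1 H1b]]. split.
  - intros; apply l2_conj, bl_l2, l2_conj; auto.
  - intros. replace (vconj (vadd x y)) with (vadd (vconj x) (vconj y)) by vring.
    rewrite (bl_add T HT) by (apply l2_conj; auto). vring.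
  - intros. replace (vconj (vscal c x)) with (vscal (Cconj c) (vconj x)) by vring.
    rewrite (bl_scal T HT) by (apply l2_conj; auto). vring.
  - exists M1. split; auto. intros x Hx. rewrite l2norm2_conj by (apply bl_l2, l2_conj; auto).
    rewrite <- (l2norm2_conj x) by auto. apply H1b, l2_conj; auto. Qed.


Ltac mext := apply functional_extensionality; intro; apply functional_extensionality; intro.

Lemma mul_matT A B : bounded_op A -> bounded_op B -> mul A B = matT (fun x => apply A (apply B x)).
Proof. intros. unfold matT. mext. rewrite apply_ev. reflexivity. Qed.

Lemma bounded_mul A B : bounded_op A -> bounded_op B -> bounded_op (mul A B).
Proof. intros. rewrite mul_matT; auto. apply bounded_matT, blin_comp; now apply bounded_blin. Qed.

Lemma apply_mul A B x : bounded_op A -> bounded_op B -> l2 x -> apply (mul A B) x = apply A (apply B x).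
Proof. intros. rewrite mul_matT; auto. rewrite apply_matT; auto. apply blin_comp; now apply bounded_blin. Qed.

Lemma idop_matT : idop = matT (fun x => x).
Proof. reflexivity. Qed.

Lemma bounded_idop : bounded_op idop.
Proof. rewrite idop_matT. apply bounded_matT, blin_id. Qed.

Lemma apply_idop x : l2 x -> apply idop x = x.
Proof. intros. rewrite idop_matT, apply_matT; auto. apply blin_id. Qed.

Lemma addop_matT A B : addop A B = matT (fun x => vadd (apply A x) (apply B x)).
Proof. unfold matT, vadd. mext. rewrite !apply_ev. reflexivity. Qed.

Lemma bounded_addop A B : bounded_op A -> bounded_op B -> bounded_op (addop A B).
Proof. intros. rewrite addop_matT. apply bounded_matT, blin_add; now apply bounded_blin. Qed.

Lemma apply_addop A B x : bounded_op A -> bounded_op B -> l2 x ->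
  apply (addop A B) x = vadd (apply A x) (apply B x).
Proof. intros. rewrite addop_matT, apply_matT; auto. apply blin_add; now apply bounded_blin. Qed.

Lemma scaleop_matT r A : scaleop r A = matT (fun x => vrs r (apply A x)).
Proof. unfold matT, vrs. mext. rewrite !apply_ev. reflexivity. Qed.

Lemma bounded_scaleop r A : bounded_op A -> bounded_op (scaleop r A).
Proof. intros. rewrite scaleop_matT. apply bounded_matT, blin_rs; now apply bounded_blin. Qed.

Lemma apply_scaleop r A x : bounded_op A -> l2 x -> apply (scaleop r A) x = vrs r (apply A x).
Proof. intros. rewrite scaleop_matT, apply_matT; auto. apply blin_rs; now apply bounded_blin. Qed.

Lemma vconj_ev k : vconj (ev k) = ev k.
Proof. vext. unfold vconj, ev, idop. destruct (Nat.eqb _ _); Cring. Qed.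

Lemma conjop_matT A : conjop A = matT (fun x => vconj (apply A (vconj x))).
Proof. unfold matT. mext. rewrite vconj_ev, apply_ev. reflexivity. Qed.

Lemma bounded_conjop A : bounded_op A -> bounded_op (conjop A).
Proof. intros. rewrite conjop_matT. apply bounded_matT, blin_conj; now apply bounded_blin. Qed.

Lemma apply_conjop A x : bounded_op A -> l2 x -> apply (conjop A) x = vconj (apply A (vconj x)).
Proof. intros. rewrite conjop_matT, apply_matT; auto. apply blin_conj; now apply bounded_blin. Qed.

Lemma Cconj_inv a : Cconj (Cconj a) = a.
Proof. Cring. Qed.

Lemma trans_conj_adj A : trans A = conjop (adj A).
Proof. unfold trans, conjop, adj. mext. now rewrite Cconj_inv. Qed.

Lemma adj_conjop A : adj (conjop A) = trans A.
Proof. unfold trans, conjop, adj. mext. now rewrite Cconj_inv. Qed.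

Lemma adj_adj A : adj (adj A) = A.
Proof. unfold adj. mext. now rewrite Cconj_inv. Qed.

Lemma cv_by_bound (a d : nat -> R) Y : 0 <= Y ->
  (forall n t, 0 < t -> 2 * Rabs (a n) <= t * d n + / t * Y) -> Un_cv d 0 -> Un_cv a 0.
Proof. intros HY H Hd e He. set (t := (Y + 1) / e).
  assert (Ht : 0 < t) by (unfold t; apply Rdiv_lt_0_compat; lra).
  assert (HtY : / t * Y < e).
  { unfold t. rewrite Rinv_div. apply (Rmult_lt_reg_r (Y+1)). lra.
    replace (e / (Y + 1) * Y * (Y + 1)) with (e * Y) by (field; lra). nra. }
  destruct (Hd (e / t)) as [N HN]. apply Rdiv_lt_0_compat; lra. exists N. intros n Hn.
  specialize (HN n Hn). unfold Rdist in *. rewrite Rminus_0_r in *. apply Rabs_def2 in HN.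
  specialize (H n t Ht). assert (t * d n < e) by (destruct HN as [HN _];
    replace e with (t * (e / t)) by (field; lra); apply Rmult_lt_compat_l; auto). lra. Qed.

Lemma cip_cont_l u u0 y : (forall n, l2 (u n)) -> l2 u0 -> l2 y -> cvl2 u u0 ->
  Un_cv (fun n => re (cip (u n) y)) (re (cip u0 y)) /\ Un_cv (fun n => im (cip (u n) y)) (im (cip u0 y)).
Proof. intros Hu Hu0 Hy H. split; apply cv_shift0.
  - apply (cv_by_bound _ (fun n => l2norm2 (vsub (u n) u0)) (l2norm2 y)); auto. apply l2norm2_nonneg; auto.
    intros n t Ht. replace (re (cip (u n) y) - re (cip u0 y)) with (re (cip (vsub (u n) u0) y)).
    apply cip_re_bound; auto. apply l2_sub; auto. rewrite cip_sub_l; auto.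
  - apply (cv_by_bound _ (fun n => l2norm2 (vsub (u n) u0)) (l2norm2 y)); auto. apply l2norm2_nonneg; auto.
    intros n t Ht. replace (im (cip (u n) y) - im (cip u0 y)) with (im (cip (vsub (u n) u0) y)).
    apply cip_im_bound; auto. apply l2_sub; auto. rewrite cip_sub_l; auto. Qed.

Lemma col_l2 A i : bounded_op A -> l2 (fun j => A j i).
Proof. intros HA. rewrite <- apply_ev. apply (bl_l2 _ (bounded_blin A HA)), l2_ev. Qed.

Lemma adj_row A y i : bounded_op A -> l2 y ->
  Csum_to (fun j => Cmul (adj A i j) (y j)) (apply (adj A) y i).
Proof. intros HA Hy. destruct (prod_conv (vconj (fun j => A j i)) y) as [l Hl]; auto.
  apply l2_conj, col_l2; auto. unfold apply. rewrite (Csum_spec _ l); auto. Qed.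

Lemma adj_cip_trunc A y z N : bounded_op A -> l2 y ->
  cip (apply A (trunc N z)) y = csumN (fun k => Cmul (Cconj (z k)) (apply (adj A) y k)) N.
Proof. intros HA Hy. pose proof (bounded_blin A HA) as HB.
  assert (Hk : forall k, cip (apply A (ev k)) y = apply (adj A) y k).
  { intros k. rewrite apply_ev. reflexivity. }
  induction N.
  - rewrite trunc_0, csumN_0, (bl_scal _ HB), cip_scal_l, Hk; auto using l2_ev.
    apply (bl_l2 _ HB), l2_ev.
  - rewrite trunc_S, csumN_S, (bl_add _ HB), cip_add_l, IHN, (bl_scal _ HB), cip_scal_l, Hk;
      auto using l2_ev, l2_trunc, l2_scal; try apply (bl_l2 _ HB); auto using l2_ev, l2_trunc, l2_scal. Qed.

Lemma l2norm2_trunc N v : l2norm2 (trunc N v) = sum_f_R0 (fun n => Cnorm2 (v n)) N.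
Proof. apply l2norm2_eq. replace (sum_f_R0 (fun n => Cnorm2 (v n)) N) with (sum_f_R0 (fun n => Cnorm2 (trunc N v n)) N).
  apply hs_finite. intros k Hk; unfold trunc; destruct (Nat.leb_spec k N); try lia; Csimpl; ring.
  apply sum_eq; intros k Hk; unfold trunc; destruct (Nat.leb_spec k N); try lia; auto. Qed.

Lemma adj_bound A : bounded_op A -> exists M, 0 < M /\ forall y, l2 y ->
  l2 (apply (adj A) y) /\ l2norm2 (apply (adj A) y) <= M * l2norm2 y.
Proof. intros HA. pose proof (bounded_blin A HA) as HB. destruct (bl_bnd _ HB) as [M [HM HMb]].
  exists M. split; auto. intros y Hy. set (v := apply (adj A) y). apply l2_of_bound. intros N.
  set (S := sum_f_R0 (fun n => Cnorm2 (v n)) N).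
  assert (E : re (cip (apply A (trunc N v)) y) = S).
  { rewrite adj_cip_trunc; auto. simpl. apply sum_eq. intros; fold v; Csimpl; ring. }
  assert (HS0 : 0 <= S) by (apply sum_nonneg; intros; apply Cnorm2_nonneg).
  pose proof (cip_re_bound (/ M) (apply A (trunc N v)) y) as Hb.
  rewrite E, Rinv_inv in Hb. pose proof (HMb (trunc N v) (l2_trunc N v)).
  rewrite l2norm2_trunc in H. fold S in H. pose proof (Rle_abs S).
  assert (HMi : 0 < / M) by (apply Rinv_0_lt_compat; auto).
  specialize (Hb HMi (bl_l2 _ HB _ (l2_trunc N v)) Hy).
  assert (/ M * l2norm2 (apply A (trunc N v)) <= S).
  { apply Rle_trans with (/ M * (M * S)). apply Rmult_le_compat_l; lra. right; field; lra. }
  lra. Qed.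

Lemma bounded_adj A : bounded_op A -> bounded_op (adj A).
Proof. intros HA. destruct (adj_bound A HA) as [M [HM H]]. exists M. intros y Hy.
  destruct (H y Hy). split; auto. intros i. eexists. apply adj_row; auto. Qed.

Lemma adj_rel A x y : bounded_op A -> l2 x -> l2 y ->
  cip (apply A x) y = cip x (apply (adj A) y).
Proof. intros HA Hx Hy. pose proof (bounded_blin A HA) as HB. symmetry. apply cip_eq.
  destruct (cip_cont_l (fun N => apply A (trunc N x)) (apply A x) y) as [H1 H2]; auto.
  - intros; apply (bl_l2 _ HB), l2_trunc.
  - apply (bl_l2 _ HB); auto.
  - apply bl_cont; auto. intros; apply l2_trunc. now apply trunc_cv.
  - split; [eapply cv_ext; [|exact H1] | eapply cv_ext; [|exact H2]]; intros n; simpl;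
      rewrite adj_cip_trunc; auto. Qed.


Lemma cv_finite_sum (f : nat -> nat -> R) (g : nat -> R) M :
  (forall i, Un_cv (fun m => f m i) (g i)) -> Un_cv (fun m => sum_f_R0 (f m) M) (sum_f_R0 g M).
Proof. intros H. induction M; simpl. apply H. apply CV_plus; auto. Qed.

Lemma cv_shiftn u l n : Un_cv u l -> Un_cv (fun m => u (m + n)%nat) l.
Proof. intros H e He. destruct (H e He) as [N HN]. exists N. intros; apply HN; lia. Qed.

Lemma pow_small q B e : 0 <= q < 1 -> 0 <= B -> 0 < e -> exists N, forall n, (n >= N)%nat -> q ^ n * B < e.
Proof. intros Hq HB He. destruct (pow_lt_1_zero q) with (y := e / (B + 1)) as [N HN].
  rewrite Rabs_right; lra. apply Rdiv_lt_0_compat; lra.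
  exists N. intros n Hn. specialize (HN n Hn). rewrite Rabs_right in HN.
  2: apply Rle_ge, pow_le; lra.
  assert (0 <= q ^ n) by (apply pow_le; lra).
  apply Rle_lt_trans with (q ^ n * (B + 1)). nra.
  replace e with (e / (B + 1) * (B + 1)) by (field; lra). apply Rmult_lt_compat_r; lra. Qed.

Lemma pow_cv0 q B : 0 <= q < 1 -> 0 <= B -> Un_cv (fun n => q ^ n * B) 0.
Proof. intros Hq HB e He. destruct (pow_small q B e) as [N HN]; auto. exists N. intros n Hn.
  unfold Rdist. rewrite Rminus_0_r, Rabs_right. auto. apply Rle_ge, Rmult_le_pos; auto. apply pow_le; lra. Qed.

Lemma pow_decr q n m : 0 <= q <= 1 -> (n <= m)%nat -> q ^ m <= q ^ n.
Proof. intros Hq H. induction H. lra. simpl. assert (0 <= q ^ m) by (apply pow_le; lra). nra. Qed.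

Lemma sq_lt a e : 0 < e -> a * a < e * e -> Rabs a < e.
Proof. intros He H. destruct (Rlt_or_le (Rabs a) e); auto.
  assert (Rabs a * Rabs a = a * a) by (rewrite <- Rabs_mult; apply Rabs_right; nra). nra. Qed.

Lemma norm_sub_sym a b : l2 a -> l2 b -> l2norm2 (vsub a b) = l2norm2 (vsub b a).
Proof. intros. apply l2norm2_eq. eapply hs_ext. 2: apply l2norm2_spec, l2_sub; auto.
  intros; unfold vsub; Csimpl; ring. Qed.

Lemma cv_Cn (u : nat -> C) (a : C) (z : C) :
  Un_cv (fun n => re (u n)) (re a) -> Un_cv (fun n => im (u n)) (im a) ->
  Un_cv (fun n => Cnorm2 (mkC (re z - re (u n)) (im z - im (u n)))) (Cnorm2 (mkC (re z - re a) (im z - im a))).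
Proof. intros H1 H2. unfold Cnorm2; simpl. apply CV_plus; apply CV_mult; apply CV_minus; auto; apply cv_const. Qed.

Lemma contraction (F : vec -> vec) q : 0 < q < 1 ->
  (forall y, l2 y -> l2 (F y)) ->
  (forall y1 y2, l2 y1 -> l2 y2 -> l2norm2 (vsub (F y1) (F y2)) <= q * l2norm2 (vsub y1 y2)) ->
  exists y, l2 y /\ F y = y.
Proof.
  intros Hq HF HC.
  set (ys := fun n => Nat.iter n F vzero).
  assert (Hl : forall n, l2 (ys n)). { induction n; simpl. apply l2_zero. apply HF; auto. }
  assert (HS : forall n, ys (S n) = F (ys n)) by reflexivity.
  remember (l2norm2 (vsub (ys 1%nat) (ys 0%nat))) as D1.
  assert (HD1 : 0 <= D1) by (subst; apply l2norm2_nonneg, l2_sub; auto).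
  set (s := (1 - q) / (2 * q)).
  assert (Hs : 0 < s) by (unfold s; apply Rdiv_lt_0_compat; lra).
  remember (1 + / s) as c.
  assert (Hc : 0 < c) by (subst; pose proof (Rinv_0_lt_compat s Hs); lra).
  set (Bd := c * D1 / ((1 - q) / 2)).
  assert (HBd : 0 <= Bd) by (unfold Bd; apply Rmult_le_pos; [nra| apply Rlt_le, Rinv_0_lt_compat; lra]).
  assert (C2 : forall k, l2norm2 (vsub (ys k) (ys 0%nat)) <= Bd).
  { induction k.
    - replace (vsub (ys 0%nat) (ys 0%nat)) with vzero by vring. rewrite l2norm2_zero; auto.
    - replace (vsub (ys (S k)) (ys 0%nat)) with (vadd (vsub (ys (S k)) (ys 1%nat)) (vsub (ys 1%nat) (ys 0%nat))) by vring.
      eapply Rle_trans. apply (norm_add_le s); auto using l2_sub. rewrite <- Heqc, <- HeqD1.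
      apply Rle_trans with ((1 + s) * (q * Bd) + c * D1).
      + apply Rplus_le_compat_r, Rmult_le_compat_l. lra. rewrite (HS k), (HS 0%nat).
        eapply Rle_trans. apply HC; auto. apply Rmult_le_compat_l; lra.
      + right. unfold Bd, s. field. lra. }
  assert (C1 : forall n k, l2norm2 (vsub (ys (n + k)%nat) (ys n)) <= q ^ n * l2norm2 (vsub (ys k) (ys 0%nat))).
  { induction n; intros k. simpl. lra. simpl Nat.add. rewrite (HS (n+k)%nat), (HS n).
    eapply Rle_trans. apply HC; auto. simpl. rewrite Rmult_assoc. apply Rmult_le_compat_l. lra. auto. }
  assert (C3 : forall n m, (n <= m)%nat -> l2norm2 (vsub (ys m) (ys n)) <= q ^ n * Bd).
  { intros n m Hnm. replace m with (n + (m - n))%nat by lia. eapply Rle_trans. apply C1.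
    apply Rmult_le_compat_l. apply pow_le; lra. auto. }
  assert (C4 : forall N n m i, (N <= n)%nat -> (N <= m)%nat -> Cnorm2 (vsub (ys m) (ys n) i) <= q ^ N * Bd).
  { intros N n m i Hn Hm. destruct (Nat.le_ge_cases n m) as [H|H].
    - eapply Rle_trans. apply l2_coord, l2_sub; auto. eapply Rle_trans. apply C3; auto.
      apply Rmult_le_compat_r; auto. apply pow_decr; lra || auto.
    - eapply Rle_trans. apply l2_coord, l2_sub; auto. rewrite norm_sub_sym; auto. eapply Rle_trans. apply C3; auto.
      apply Rmult_le_compat_r; auto. apply pow_decr; lra || auto. }
  assert (Cre : forall i, exists l, Un_cv (fun n => re (ys n i)) l).
  { intros i. destruct (R_complete (fun n => re (ys n i))) as [l Hl']. 2: eauto.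
    intros e He. destruct (pow_small q Bd (e * e)) as [N HN]; try lra. nra. exists N. intros n m Hn Hm.
    specialize (HN N (le_n N)). pose proof (C4 N n m i Hn Hm). unfold Rdist. apply sq_lt; auto.
    unfold vsub, Cnorm2 in H; simpl in H. pose proof (Rle_0_sqr (im (ys m i) - im (ys n i))). unfold Rsqr in *.
    replace ((re (ys n i) - re (ys m i)) * (re (ys n i) - re (ys m i))) with ((re (ys m i) - re (ys n i)) * (re (ys m i) - re (ys n i))) by ring.
    lra. }
  assert (Cim : forall i, exists l, Un_cv (fun n => im (ys n i)) l).
  { intros i. destruct (R_complete (fun n => im (ys n i))) as [l Hl']. 2: eauto.
    intros e He. destruct (pow_small q Bd (e * e)) as [N HN]; try lra. nra. exists N. intros n m Hn Hm.
    specialize (HN N (le_n N)). pose proof (C4 N n m i Hn Hm). unfold Rdist. apply sq_lt; auto.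
    unfold vsub, Cnorm2 in H; simpl in H. pose proof (Rle_0_sqr (re (ys m i) - re (ys n i))). unfold Rsqr in *.
    replace ((im (ys n i) - im (ys m i)) * (im (ys n i) - im (ys m i))) with ((im (ys m i) - im (ys n i)) * (im (ys m i) - im (ys n i))) by ring.
    lra. }
  set (ystar := fun i => mkC (epsilon (inhabits 0) (fun l => Un_cv (fun n => re (ys n i)) l))
                             (epsilon (inhabits 0) (fun l => Un_cv (fun n => im (ys n i)) l))).
  assert (Yre : forall i, Un_cv (fun n => re (ys n i)) (re (ystar i))).
  { intros i. apply (epsilon_spec (inhabits 0) _ (Cre i)). }
  assert (Yim : forall i, Un_cv (fun n => im (ys n i)) (im (ystar i))).
  { intros i. apply (epsilon_spec (inhabits 0) _ (Cim i)). }
  assert (Bn : forall n, l2 (vsub (ys n) ystar) /\ l2norm2 (vsub (ys n) ystar) <= q ^ n * Bd).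
  { intros n. apply l2_of_bound. intros M.
    apply (@Rle_cv_lim (fun m => sum_f_R0 (fun i => Cnorm2 (vsub (ys n) (ys (m + n)%nat) i)) M) (fun _ => q ^ n * Bd)).
    - intros m. eapply Rle_trans. apply l2_partial, l2_sub; auto. rewrite norm_sub_sym; auto. apply C3. lia.
    - apply cv_finite_sum. intros i.
      apply (cv_Cn (fun m => ys (m + n)%nat i) (ystar i) (ys n i)).
      exact (cv_shiftn (fun m => re (ys m i)) _ n (Yre i)).
      exact (cv_shiftn (fun m => im (ys m i)) _ n (Yim i)).
    - apply cv_const. }
  assert (Hys : l2 ystar).
  { replace ystar with (vsub (ys 0%nat) (vsub (ys 0%nat) ystar)) by vring. apply l2_sub; auto. apply Bn. }
  assert (Hcv : cvl2 ys ystar).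
  { apply (cv_sandwich _ (fun n => q ^ n * Bd) 1). intros n. split. apply l2norm2_nonneg, Bn.
    rewrite Rmult_1_l; apply Bn. apply pow_cv0; lra. }
  assert (HcvF : cvl2 (fun n => F (ys n)) (F ystar)).
  { apply (cv_sandwich _ (fun n => l2norm2 (vsub (ys n) ystar)) q); auto. intros n. split.
    apply l2norm2_nonneg, l2_sub; auto. apply HC; auto. }
  exists ystar. split; auto. vext. rename x into i.
  destruct (coord_cv (fun n => F (ys n)) (F ystar) i) as [H1 H2]; auto.
  apply Ceq.
  - apply (UL_sequence (fun n => re (F (ys n) i))); auto.
    apply (cv_ext (fun m => re (ys (m + 1)%nat i))). intros m. rewrite Nat.add_1_r. reflexivity.
    exact (cv_shiftn (fun m => re (ys m i)) _ 1 (Yre i)).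
  - apply (UL_sequence (fun n => im (F (ys n) i))); auto.
    apply (cv_ext (fun m => im (ys (m + 1)%nat i))). intros m. rewrite Nat.add_1_r. reflexivity.
    exact (cv_shiftn (fun m => im (ys m i)) _ 1 (Yim i)).
Qed.


Lemma coercive_solve Z d : blin Z -> 0 < d -> (forall y, l2 y -> d * l2norm2 y <= re (cip (Z y) y)) ->
  forall b, l2 b -> exists y, l2 y /\ Z y = b.
Proof.
  intros HZ Hd Hco b Hb. destruct (bl_bnd Z HZ) as [M [HM HMb]].
  set (M1 := M + d + 1). assert (HM1 : 0 < M1) by (unfold M1; lra).
  set (t := d / M1). assert (Ht : 0 < t) by (unfold t; apply Rdiv_lt_0_compat; lra).
  assert (Htd : t * t * M <= t * d).
  { apply Rle_trans with (t * t * M1). apply Rmult_le_compat_l. nra. unfold M1; lra.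
    right. unfold t; field; lra. }
  set (F := fun y => vadd y (vrs t (vsub b (Z y)))).
  set (q := Rmax (1 - t * d) (1/2)).
  assert (Hq : 0 < q < 1).
  { split. apply Rlt_le_trans with (1/2). lra. apply Rmax_r. apply Rmax_lub_lt; try lra.
    assert (0 < t * d) by (apply Rmult_lt_0_compat; auto). lra. }
  destruct (contraction F q) as [y [Hy HFy]]; auto.
  - intros y Hy. unfold F. apply l2_add; auto. apply l2_rs, l2_sub; auto. apply (bl_l2 _ HZ); auto.
  - intros y1 y2 H1 H2.
    assert (HZ1 := bl_l2 _ HZ _ H1). assert (HZ2 := bl_l2 _ HZ _ H2).
    replace (vsub (F y1) (F y2)) with (vsub (vsub y1 y2) (vrs t (vsub (Z y1) (Z y2)))) by (unfold F; vring).
    rewrite <- (bl_sub Z) by auto. set (v := vsub y1 y2). assert (Hv : l2 v) by (apply l2_sub; auto).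
    assert (HZv := bl_l2 _ HZ _ Hv).
    rewrite norm_sub by (auto; apply l2_rs; auto). rewrite l2norm2_rs by auto.
    rewrite (cip_sym (vrs t (Z v)) v) by (auto; apply l2_rs; auto). rewrite cip_rs_l by auto.
    simpl. pose proof (Hco v Hv). pose proof (HMb v Hv). pose proof (l2norm2_nonneg v Hv).
    assert (t * t * l2norm2 (Z v) <= t * d * l2norm2 v).
    { apply Rle_trans with (t * t * (M * l2norm2 v)). apply Rmult_le_compat_l. nra. auto.
      rewrite <- Rmult_assoc. apply Rmult_le_compat_r; auto. }
    assert (t * (d * l2norm2 v) <= t * re (cip (Z v) v)) by (apply Rmult_le_compat_l; lra).
    assert ((1 - t * d) * l2norm2 v <= q * l2norm2 v) by (apply Rmult_le_compat_r; auto; apply Rmax_l).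
    nra.
  - exists y. split; auto. vext. rename x into i.
    pose proof (f_equal (fun w => re (w i)) HFy) as E1. pose proof (f_equal (fun w => im (w i)) HFy) as E2.
    unfold F, vadd, vrs, vsub in E1, E2; Csimpl.
    apply Ceq; apply (Rmult_eq_reg_l t); lra. Qed.

Lemma matinv A R : bounded_op A -> (forall x, l2 x -> l2 (R x)) ->
  (exists K, 0 < K /\ forall x, l2 x -> l2norm2 (R x) <= K * l2norm2 x) ->
  (forall x, l2 x -> apply A (R x) = x) -> (forall x, l2 x -> R (apply A x) = x) ->
  bounded_invertible A.
Proof. intros HA Hl HK H1 H2. pose proof (bounded_blin A HA) as HB.
  assert (HR : blin R).
  { split; auto.
    - intros x y Hx Hy. rewrite <- (H1 x Hx) at 1. rewrite <- (H1 y Hy) at 1.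
      rewrite <- (bl_add _ HB) by auto. apply H2. apply l2_add; auto.
    - intros c x Hx. rewrite <- (H1 x Hx) at 1. rewrite <- (bl_scal _ HB) by auto. apply H2. apply l2_scal; auto. }
  exists (matT R). split; [|split].
  - apply bounded_matT; auto.
  - rewrite mul_matT; auto. 2: apply bounded_matT; auto. rewrite idop_matT. unfold matT. mext.
    change (fun i k : nat => R (ev k) i) with (matT R).
    rewrite apply_matT; auto using l2_ev. rewrite H1; auto using l2_ev.
  - rewrite mul_matT; auto. 2: apply bounded_matT; auto. rewrite idop_matT. unfold matT. mext.
    change (fun i k : nat => R (ev k) i) with (matT R).
    rewrite apply_matT; auto using l2_ev. rewrite H2; auto using l2_ev. apply (bl_l2 _ HB), l2_ev. Qed.

Lemma re_cip_sym x y : l2 x -> l2 y -> re (cip x y) = re (cip y x).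
Proof. intros. rewrite (cip_sym x y); auto. Qed.

Lemma cip_zero_l v : l2 v -> cip vzero v = C0.
Proof. intros. replace vzero with (vrs 0 v) by vring. rewrite cip_rs_l; auto. Cring. Qed.

Lemma proj_norm P : blin P -> (forall x, l2 x -> P (P x) = P x) ->
  (forall x y, l2 x -> l2 y -> cip (P x) y = cip x (P y)) -> forall v, l2 v -> l2norm2 (P v) <= l2norm2 v.
Proof. intros HP Hi Hs v Hv. assert (HPv := bl_l2 _ HP _ Hv).
  assert (E : l2norm2 (P v) = re (cip v (P v))).
  { rewrite <- Hi at 2 by auto. rewrite <- Hs by auto. rewrite cip_self; auto. }
  pose proof (cip_re_bound 1 v (P v) Rlt_0_1 Hv HPv). rewrite Rinv_1 in H.
  pose proof (Rle_abs (re (cip v (P v)))). lra. Qed.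


Lemma key_inverse (eps : R) (A Ad P Q : vec -> vec) :
  (eps = 1 \/ eps = -1) -> blin A -> blin Ad -> blin P -> blin Q ->
  (forall x y, l2 x -> l2 y -> cip (A x) y = cip x (Ad y)) ->
  (forall x, l2 x -> P (P x) = P x) -> (forall x y, l2 x -> l2 y -> cip (P x) y = cip x (P y)) ->
  (forall x, l2 x -> Q (Q x) = Q x) -> (forall x y, l2 x -> l2 y -> cip (Q x) y = cip x (Q y)) ->
  (eps = 1 -> exists a, 0 <= a < 1 /\ forall x, l2 x -> l2norm2 (A x) <= a * l2norm2 x) ->
  exists R, (forall x, l2 x -> l2 (R x)) /\
   (exists K, 0 < K /\ forall x, l2 x -> l2norm2 (R x) <= K * l2norm2 x) /\
   (forall x, l2 x -> vadd (R x) (vrs (-1) (vrs eps (Ad (Q (A (P (R x))))))) = x) /\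
   (forall x, l2 x -> R (vadd x (vrs (-1) (vrs eps (Ad (Q (A (P x))))))) = x).
Proof.
  intros Heps HA HAd HP HQ Hadj HPi HPs HQi HQs Ha.
  set (u := fun x => Ad (Q (A (P x)))).
  assert (Hu : blin u) by (unfold u; apply (blin_comp Ad (fun x => Q (A (P x)))); auto;
    apply (blin_comp Q (fun x => A (P x))); auto; apply (blin_comp A P); auto).
  assert (HuP : forall x, l2 x -> u (P x) = u x) by (intros; unfold u; rewrite HPi; auto).
  set (Z := fun y => vadd y (vrs (-1) (vrs eps (P (u y))))).
  assert (HZ : blin Z) by (unfold Z; apply blin_add; [apply blin_id| apply blin_rs, blin_rs, (blin_comp P u); auto]).
  assert (Hre : forall y, l2 y -> re (cip (Z y) y) = l2norm2 y - eps * l2norm2 (Q (A (P y)))).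
  { intros y Hy.
    assert (Hpy := bl_l2 _ HP _ Hy). assert (Ha1 := bl_l2 _ HA _ Hpy). assert (Hq1 := bl_l2 _ HQ _ Ha1).
    assert (Hu1 := bl_l2 _ Hu _ Hy). assert (Hpu := bl_l2 _ HP _ Hu1).
    assert (E : cip (A (P y)) (Q (A (P y))) = mkC (l2norm2 (Q (A (P y)))) 0).
    { rewrite <- (cip_self (Q (A (P y)))), HQs, HQi; auto. }
    unfold Z. rewrite cip_add_l, cip_rs_l, cip_rs_l, cip_self; auto; try (apply l2_rs; auto; apply l2_rs; auto).
    rewrite HPs by auto. unfold u. rewrite (cip_sym (P y) (Ad (Q (A (P y))))) by (auto; apply (bl_l2 _ HAd); auto).
    rewrite <- Hadj, E by auto. simpl. ring. }
  assert (Hco : exists d, 0 < d /\ forall y, l2 y -> d * l2norm2 y <= re (cip (Z y) y)).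
  { destruct Heps as [E|E].
    - destruct (Ha E) as [a [Ha0 Hab]]. exists (1 - a). split. lra. intros y Hy. rewrite Hre, E by auto.
      assert (Hpy := bl_l2 _ HP _ Hy). assert (Ha1 := bl_l2 _ HA _ Hpy).
      pose proof (proj_norm Q HQ HQi HQs _ Ha1). pose proof (Hab _ Hpy).
      pose proof (proj_norm P HP HPi HPs _ Hy). pose proof (l2norm2_nonneg _ Hy). nra.
    - exists 1. split. lra. intros y Hy. rewrite Hre, E by auto.
      pose proof (l2norm2_nonneg (Q (A (P y)))). assert (l2 (Q (A (P y)))) by (apply (bl_l2 _ HQ), (bl_l2 _ HA), (bl_l2 _ HP); auto).
      specialize (H H0). lra. }
  destruct Hco as [d [Hd Hco]].
  assert (Hsol : forall b, l2 b -> exists w, l2 w /\ Z w = P b).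
  { intros b Hb. apply (coercive_solve Z d); auto. apply (bl_l2 _ HP); auto. }
  set (W := fun b => epsilon (inhabits vzero) (fun w => l2 w /\ Z w = P b)).
  assert (HW : forall b, l2 b -> l2 (W b) /\ Z (W b) = P b).
  { intros b Hb. apply (epsilon_spec (inhabits vzero) (fun w => l2 w /\ Z w = P b)). auto. }
  assert (Huniq : forall w1 w2, l2 w1 -> l2 w2 -> Z w1 = Z w2 -> w1 = w2).
  { intros w1 w2 H1 H2 E. assert (Hv : l2 (vsub w1 w2)) by (apply l2_sub; auto).
    assert (E2 : Z (vsub w1 w2) = vzero) by (rewrite (bl_sub Z), E by auto; vring).
    pose proof (Hco _ Hv). rewrite E2, cip_zero_l in H by auto. simpl in H.
    assert (l2norm2 (vsub w1 w2) <= 0) by nra. apply l2norm2_zero_inv in H0; auto.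
    vext. pose proof (f_equal (fun w => re (w x)) H0). pose proof (f_equal (fun w => im (w x)) H0).
    unfold vsub, vzero in *; Csimpl. apply Ceq; lra. }
  destruct (bl_bnd P HP) as [MP [HMP HMPb]]. destruct (bl_bnd u Hu) as [Mu [HMu HMub]].
  assert (HWb : forall b, l2 b -> l2norm2 (W b) <= MP / (d * d) * l2norm2 b).
  { intros b Hb. destruct (HW b Hb) as [Hw HZw]. set (w := W b) in *.
    assert (Hpb := bl_l2 _ HP _ Hb).
    pose proof (Hco w Hw). rewrite HZw in H.
    pose proof (cip_re_bound (/ d) (P b) w (Rinv_0_lt_compat d Hd) Hpb Hw). rewrite Rinv_inv in H0.
    pose proof (Rle_abs (re (cip (P b) w))). pose proof (HMPb b Hb).
    assert (d * l2norm2 w <= / d * l2norm2 (P b)) by lra.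
    assert (d * (d * l2norm2 w) <= d * (/ d * l2norm2 (P b))) by (apply Rmult_le_compat_l; lra).
    replace (d * (/ d * l2norm2 (P b))) with (l2norm2 (P b)) in H4 by (field; lra).
    apply (Rmult_le_reg_l (d * d)). nra. replace (d * d * (MP / (d * d) * l2norm2 b)) with (MP * l2norm2 b) by (field; lra).
    nra. }
  set (R := fun b => vadd b (vrs eps (u (W b)))).
  assert (HeE : eps * eps = 1) by (destruct Heps; subst; ring).
  exists R. split; [|split; [|split]].
  - intros x Hx. unfold R. apply l2_add; auto. apply l2_rs, (bl_l2 _ Hu), HW; auto.
  - exists (2 + 2 * (Mu * (MP / (d * d)))). split.
    { assert (0 < MP / (d * d)) by (apply Rdiv_lt_0_compat; nra). nra. }
    intros x Hx. unfold R. destruct (HW x Hx) as [Hw _].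
    assert (Huw := bl_l2 _ Hu _ Hw).
    eapply Rle_trans. apply (norm_add_le 1); auto. lra. apply l2_rs; auto.
    rewrite Rinv_1, l2norm2_rs, HeE by auto.
    pose proof (HMub _ Hw). pose proof (HWb x Hx). pose proof (l2norm2_nonneg _ Hx).
    assert (Mu * l2norm2 (W x) <= Mu * (MP / (d * d) * l2norm2 x)) by (apply Rmult_le_compat_l; lra).
    nra.
  - intros x Hx. destruct (HW x Hx) as [Hw HZw]. assert (Huw := bl_l2 _ Hu _ Hw).
    assert (HPR : P (R x) = W x).
    { unfold R. rewrite (bl_add P HP), (bl_rs P) by (auto; apply l2_rs; auto).
      rewrite <- HZw. unfold Z. vring. }
    change (Ad (Q (A (P (R x))))) with (u (R x)). rewrite <- HuP.
    2: unfold R; apply l2_add; auto; apply l2_rs; auto.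
    rewrite HPR. unfold R. vring.
  - intros x Hx. assert (Hux := bl_l2 _ Hu _ Hx).
    change (Ad (Q (A (P x)))) with (u x).
    assert (HY : l2 (vadd x (vrs (-1) (vrs eps (u x))))) by (apply l2_add; auto; apply l2_rs, l2_rs; auto).
    assert (EW : W (vadd x (vrs (-1) (vrs eps (u x)))) = P x).
    { apply Huniq. apply HW; auto. apply (bl_l2 _ HP); auto. destruct (HW _ HY) as [_ ->].
      unfold Z. rewrite HuP by auto. rewrite (bl_add P HP), (bl_rs P), (bl_rs P) by (auto; apply l2_rs; auto; apply l2_rs; auto).
      reflexivity. }
    unfold R. rewrite EW, HuP by auto. vring.
Qed.


Lemma adj_norm_bound A a : bounded_op A -> 0 <= a < 1 ->
  (forall x, l2 x -> l2norm2 (apply A x) <= a * l2norm2 x) ->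
  exists a', 0 <= a' < 1 /\ forall v, l2 v -> l2norm2 (apply (adj A) v) <= a' * l2norm2 v.
Proof. intros HA Ha Hb. exists (/ (2 - a)). split.
  split. apply Rlt_le, Rinv_0_lt_compat; lra. rewrite <- Rinv_1. apply Rinv_lt_contravar; lra.
  intros v Hv. pose proof (bounded_blin _ (bounded_adj A HA)) as HB. set (w := apply (adj A) v).
  assert (Hw : l2 w) by (apply (bl_l2 _ HB); auto).
  assert (HAw : l2 (apply A w)) by (apply (bl_l2 _ (bounded_blin A HA)); auto).
  assert (E : l2norm2 w = re (cip (apply A w) v)).
  { rewrite adj_rel by auto. fold w. rewrite cip_self; auto. }
  pose proof (cip_re_bound 1 _ _ Rlt_0_1 HAw Hv). rewrite Rinv_1 in H.
  pose proof (Rle_abs (re (cip (apply A w) v))). pose proof (Hb w Hw).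
  apply (Rmult_le_reg_l (2 - a)). lra. replace ((2 - a) * (/ (2 - a) * l2norm2 v)) with (l2norm2 v) by (field; lra).
  lra. Qed.

Lemma bounded_trans A : bounded_op A -> bounded_op (trans A).
Proof. intros. rewrite trans_conj_adj. apply bounded_conjop, bounded_adj; auto. Qed.

Lemma vconj_inv x : vconj (vconj x) = x.
Proof. vring. Qed.

Ltac bnd := repeat (first [apply bounded_mul | apply bounded_scaleop | apply bounded_idop | apply bounded_addop | assumption]).

Theorem mainTheorem3 (eps : R) (Phi Psi PhiInv : op) :
  (eps = 1 \/ eps = -1) ->
  bounded_op Phi -> bounded_op Psi ->
  mul Phi (adj Phi) = addop idop (scaleop eps (mul Psi (adj Psi))) ->
  mul (adj Phi) Phi = addop idop (scaleop eps (mul (trans Psi) (conjop Psi))) ->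
  mul Phi (trans Psi) = scaleop eps (mul Psi (trans Phi)) ->
  mul (adj Phi) Psi = scaleop eps (mul (trans Psi) (conjop Phi)) ->
  bounded_op PhiInv -> mul Phi PhiInv = idop -> mul PhiInv Phi = idop ->
  let X := mul (conjop Psi) PhiInv in
  (eps = 1 -> opnorm_lt X 1) /\
  (forall P : op, orth_projector P ->
     bounded_invertible
       (subop idop (scaleop eps (mul (mul (mul (adj X) (trans P)) X) P))) /\
     bounded_invertible
       (subop idop (scaleop eps (mul (mul (mul X P) (adj X)) (trans P))))).
Proof.
  intros Heps HPhi HPsi H1 H2 H3 H4 HPi HPPi HPiP X.
  assert (HcPsi : bounded_op (conjop Psi)) by (apply bounded_conjop; auto).
  assert (HX : bounded_op X) by (apply bounded_mul; auto).
  assert (HaX : bounded_op (adj X)) by (apply bounded_adj; auto).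
  assert (HaPhi : bounded_op (adj Phi)) by (apply bounded_adj; auto).
  assert (HtPsi : bounded_op (trans Psi)) by (apply bounded_trans; auto).
  pose proof (bounded_blin _ HPhi) as BPhi. pose proof (bounded_blin _ HPi) as BPi.
  pose proof (bounded_blin _ HcPsi) as BcPsi. pose proof (bounded_blin _ HX) as BX.
  assert (Key : forall x, l2 x -> l2norm2 x = l2norm2 (apply PhiInv x) + eps * l2norm2 (apply X x)).
  { intros x Hx. set (y := apply PhiInv x). assert (Hy : l2 y) by (apply (bl_l2 _ BPi); auto).
    assert (Ex : apply Phi y = x) by (unfold y; rewrite <- apply_mul, HPPi, apply_idop; auto).
    assert (EX : apply X x = apply (conjop Psi) y) by (unfold X, y; rewrite apply_mul; auto).
    set (z := apply (conjop Psi) y) in *. assert (Hz : l2 z) by (apply (bl_l2 _ BcPsi); auto).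
    assert (E2 : apply (adj Phi) x = vadd y (vrs eps (apply (trans Psi) z))).
    { rewrite <- Ex, <- apply_mul, H2 by auto. rewrite apply_addop, apply_idop, apply_scaleop, apply_mul; auto.
      apply bounded_mul; auto. apply bounded_idop. apply bounded_scaleop, bounded_mul; auto. }
    assert (Hw : l2 (apply (trans Psi) z)) by (apply (bl_l2 _ (bounded_blin _ HtPsi)); auto).
    rewrite EX. rewrite <- (adj_conjop Psi) in Hw, E2.
    transitivity (re (cip x x)). rewrite cip_self; auto.
    rewrite <- Ex at 1. rewrite adj_rel, E2 by auto. rewrite re_cip_sym by (auto; apply l2_add; auto; apply l2_rs; auto).
    rewrite cip_add_l, cip_rs_l by (auto; apply l2_rs; auto). simpl.
    rewrite (re_cip_sym (apply (adj (conjop Psi)) z) y), <- adj_rel by auto. fold z. rewrite !cip_self by auto. simpl. ring. }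
  assert (PartI : eps = 1 -> exists a, 0 <= a < 1 /\ forall x, l2 x -> l2norm2 (apply X x) <= a * l2norm2 x).
  { intros E. destruct (bl_bnd _ BPhi) as [M [HM HMb]]. exists (1 - / (M + 1)).
    assert (HM1 : 0 < / (M + 1) < 1) by (split; [apply Rinv_0_lt_compat; lra| rewrite <- Rinv_1; apply Rinv_lt_contravar; lra]).
    split. lra. intros x Hx. pose proof (Key x Hx) as K. rewrite E in K.
    set (y := apply PhiInv x) in *. assert (Hy : l2 y) by (apply (bl_l2 _ BPi); auto).
    assert (Ex : apply Phi y = x) by (unfold y; rewrite <- apply_mul, HPPi, apply_idop; auto).
    pose proof (HMb y Hy). rewrite Ex in H. pose proof (l2norm2_nonneg y Hy).
    assert (l2norm2 x * / (M + 1) <= l2norm2 y).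
    { apply (Rmult_le_reg_l (M + 1)). lra. replace ((M + 1) * (l2norm2 x * / (M + 1))) with (l2norm2 x) by (field; lra). nra. }
    nra. }
  split.
  - intros E. destruct (PartI E) as [a [Ha Hab]]. exists (sqrt a). split.
    + split. apply sqrt_pos. rewrite <- sqrt_1. apply sqrt_lt_1_alt; lra.
    + intros x Hx. split. apply (bl_l2 _ BX); auto. rewrite sqrt_sqrt by lra. auto.
  - intros P [HP [HPP HaP]].
    pose proof (bounded_blin _ HP) as BP.
    assert (HtP : bounded_op (trans P)) by (apply bounded_trans; auto).
    pose proof (bounded_blin _ HtP) as BtP. pose proof (bounded_blin _ HaX) as BaX.
    assert (Pi : forall x, l2 x -> apply P (apply P x) = apply P x) by (intros; rewrite <- apply_mul, HPP; auto).
    assert (Ps : forall x y, l2 x -> l2 y -> cip (apply P x) y = cip x (apply P y)).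
    { intros. rewrite adj_rel, HaP; auto. }
    assert (EtP : trans P = conjop P) by (rewrite trans_conj_adj, HaP; auto).
    assert (Qi : forall x, l2 x -> apply (trans P) (apply (trans P) x) = apply (trans P) x).
    { intros x Hx. rewrite EtP. assert (Hc : l2 (vconj x)) by (apply l2_conj; auto).
      assert (Hc2 : l2 (vconj (apply P (vconj x)))) by (apply l2_conj, (bl_l2 _ BP); auto).
      rewrite (apply_conjop P x) by auto. rewrite (apply_conjop P _) by auto.
      rewrite vconj_inv, Pi; auto. }
    assert (Qs : forall x y, l2 x -> l2 y -> cip (apply (trans P) x) y = cip x (apply (trans P) y)).
    { assert (E : adj (trans P) = trans P) by (rewrite EtP at 2; reflexivity).
      intros. rewrite adj_rel, E by auto. reflexivity. }
    assert (Adj1 : forall x y, l2 x -> l2 y -> cip (apply X x) y = cip x (apply (adj X) y)).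
    { intros; apply adj_rel; auto. }
    assert (Adj2 : forall x y, l2 x -> l2 y -> cip (apply (adj X) x) y = cip x (apply X y)).
    { intros x y Hx Hy. rewrite cip_sym, <- Adj1, <- cip_sym; auto; apply (bl_l2 _ BX) || apply (bl_l2 _ BaX); auto. }
    pose proof bounded_idop as B0.
    split.
    + destruct (key_inverse eps (apply X) (apply (adj X)) (apply P) (apply (trans P)))
        as [R [HR1 [HR2 [HR3 HR4]]]]; auto.
      pose proof (bounded_mul _ _ HaX HtP) as B1. pose proof (bounded_mul _ _ B1 HX) as B2.
      pose proof (bounded_mul _ _ B2 HP) as B3. pose proof (bounded_scaleop eps _ B3) as B4.
      pose proof (bounded_scaleop (-1) _ B4) as B5.
      assert (EY : forall x, l2 x -> apply (subop idop (scaleop eps (mul (mul (mul (adj X) (trans P)) X) P))) x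
                    = vadd x (vrs (-1) (vrs eps (apply (adj X) (apply (trans P) (apply X (apply P x))))))).
      { intros x Hx. unfold subop. assert (Hpx : l2 (apply P x)) by (apply (bl_l2 _ BP); auto).
        assert (Hxpx : l2 (apply X (apply P x))) by (apply (bl_l2 _ BX); auto).
        rewrite apply_addop by auto. rewrite apply_idop by auto.
        rewrite apply_scaleop by auto. rewrite apply_scaleop by auto.
        rewrite apply_mul by auto. rewrite apply_mul by auto. rewrite apply_mul by auto. reflexivity. }
      apply (matinv _ R); auto.
      * unfold subop. apply bounded_addop; auto.
      * intros x Hx. rewrite EY; auto.
      * intros x Hx. rewrite EY; auto.
    + destruct (key_inverse eps (apply (adj X)) (apply X) (apply (trans P)) (apply P))
        as [R [HR1 [HR2 [HR3 HR4]]]]; auto.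
      { intros E. destruct (PartI E) as [a [Ha Hab]]. destruct (adj_norm_bound X a) as [a' [Ha' Hab']]; eauto. }
      pose proof (bounded_mul _ _ HX HP) as B1. pose proof (bounded_mul _ _ B1 HaX) as B2.
      pose proof (bounded_mul _ _ B2 HtP) as B3. pose proof (bounded_scaleop eps _ B3) as B4.
      pose proof (bounded_scaleop (-1) _ B4) as B5.
      assert (EY : forall x, l2 x -> apply (subop idop (scaleop eps (mul (mul (mul X P) (adj X)) (trans P)))) x
                    = vadd x (vrs (-1) (vrs eps (apply X (apply P (apply (adj X) (apply (trans P) x))))))).
      { intros x Hx. unfold subop. assert (Hpx : l2 (apply (trans P) x)) by (apply (bl_l2 _ BtP); auto).
        assert (Hxpx : l2 (apply (adj X) (apply (trans P) x))) by (apply (bl_l2 _ BaX); auto).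
        rewrite apply_addop by auto. rewrite apply_idop by auto.
        rewrite apply_scaleop by auto. rewrite apply_scaleop by auto.
        rewrite apply_mul by auto. rewrite apply_mul by auto. rewrite apply_mul by auto. reflexivity. }
      apply (matinv _ R); auto.
      * unfold subop. apply bounded_addop; auto.
      * intros x Hx. rewrite EY; auto.
      * intros x Hx. rewrite EY; auto.
Qed.
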